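(* Let $\mathbf{N}_1,\dots,\mathbf{N}_L$ be nonsingular $D\times D$ integer matrices that are pairwise commutative and coprime, i.e. $\mathbf{N}_i\mathbf{N}_j=\mathbf{N}_j\mathbf{N}_i$ and $\mathbf{N}_i,\mathbf{N}_j$ are coprime for all $i\ne j$. Then for any subset $\{i_1,\dots,i_p\}\subset\{1,\dots,L\}$ and any subset $\{j_1,\dots,j_q\}\subset\{1,\dots,L\}\setminus\{i_1,\dots,i_p\}$, the matrices $\mathbf{N}_{i_1}\cdots\mathbf{N}_{i_p}$ and $\mathbf{N}_{j_1}\cdots\mathbf{N}_{j_q}$ are commutative and coprime. Moreover, for any subset $\{i_1,\dots,i_p\}$ with $p\ge 2$, $\mathbf{N}_{i_1}\cdots\mathbf{N}_{i_p}$ is an lcm (i.e. simultaneously an lcrm and an lclm) of $\mathbf{N}_{i_1},\dots,\mathbf{N}_{i_p}$.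
   Context: All matrices are $D\times D$ integer matrices. Two integer matrices are left (resp. right) coprime if every common left (resp. right) divisor is unimodular (integer with determinant $\pm1$); $\mathbf{A}$ is a left divisor of $\mathbf{M}$ if $\mathbf{A}^{-1}\mathbf{M}$ is an integer matrix, a right divisor if $\mathbf{M}\mathbf{A}^{-1}$ is. For commuting nonsingular integer matrices, left and right coprimeness are equivalent and are simply called ''coprime''. Crm/lcrm: a nonsingular integer $\mathbf{C}$ with $\mathbf{C}=\mathbf{M}_i\mathbf{P}_i$ ($\mathbf{P}_i$ integer) for all $i$ is a crm; an lcrm is a crm $\mathbf{R}$ such that every crm equals $\mathbf{R}\mathbf{A}$ for an integer $\mathbf{A}$; clm/lclm are defined symmetrically with left multiplication. An ''lcm'' means a matrix that is both an lcrm and an lclm. *)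

(* Defs.v *)
From HB Require Import structures.
From mathcomp Require Import all_boot all_order all_algebra.
Set Implicit Arguments. Unset Strict Implicit. Unset Printing Implicit Defensive.
Import Order.TTheory GRing.Theory Num.Theory.
Local Open Scope ring_scope.

Notation imx D := 'M[int]_D.

Definition nonsingular (D : nat) (A : imx D) : Prop := \det A != 0.

Definition unimodular (D : nat) (U : imx D) : Prop := \det U = 1 \/ \det U = -1.

(* A is a left divisor of M: A nonsingular and A^{-1} M is an integer matrix *)
Definition left_divisor (D : nat) (A M : imx D) : Prop :=
  nonsingular A /\ exists X : imx D, M = A *m X.

(* A is a right divisor of M: A nonsingular and M A^{-1} is an integer matrix *)
Definition right_divisor (D : nat) (A M : imx D) : Prop :=
  nonsingular A /\ exists X : imx D, M = X *m A.

Definition left_coprime (D : nat) (M1 M2 : imx D) : Prop :=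
  forall A : imx D, left_divisor A M1 -> left_divisor A M2 -> unimodular A.

Definition right_coprime (D : nat) (M1 M2 : imx D) : Prop :=
  forall A : imx D, right_divisor A M1 -> right_divisor A M2 -> unimodular A.

(* "coprime" (used for commuting matrices, where left and right coprimeness
   are equivalent): both left and right coprime *)
Definition mx_coprime (D : nat) (M1 M2 : imx D) : Prop :=
  left_coprime M1 M2 /\ right_coprime M1 M2.

Definition mx_commute (D : nat) (A B : imx D) : Prop := A *m B = B *m A.

(* ordered product N_{i_1} ... N_{i_p} over the elements of I (increasing order) *)
Definition mxprod (D L : nat) (N : 'I_L -> imx D) (I : {set 'I_L}) : imx D :=
  foldr (fun i P => N i *m P) 1%:M (enum I).

Definition crm (D L : nat) (N : 'I_L -> imx D) (I : {set 'I_L}) (C : imx D) : Prop :=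
  nonsingular C /\ forall i, i \in I -> exists P : imx D, C = N i *m P.

Definition lcrm (D L : nat) (N : 'I_L -> imx D) (I : {set 'I_L}) (R : imx D) : Prop :=
  crm N I R /\ forall C : imx D, crm N I C -> exists A : imx D, C = R *m A.

Definition clm (D L : nat) (N : 'I_L -> imx D) (I : {set 'I_L}) (C : imx D) : Prop :=
  nonsingular C /\ forall i, i \in I -> exists P : imx D, C = P *m N i.

Definition lclm (D L : nat) (N : 'I_L -> imx D) (I : {set 'I_L}) (R : imx D) : Prop :=
  clm N I R /\ forall C : imx D, clm N I C -> exists A : imx D, C = A *m R.

Definition is_lcm (D L : nat) (N : 'I_L -> imx D) (I : {set 'I_L}) (R : imx D) : Prop :=
  lcrm N I R /\ lclm N I R.

(* Main.v *)
Require Import Defs.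
From HB Require Import structures.
From mathcomp Require Import all_boot all_order all_algebra.
Import GRing.Theory Num.Theory.
Local Open Scope ring_scope.

Definition LB {D : nat} (A B : 'M[int]_D) := exists X Y : 'M[int]_D, A *m X + B *m Y = 1%:M.
Definition RB {D : nat} (A B : 'M[int]_D) := exists X Y : 'M[int]_D, X *m A + Y *m B = 1%:M.

Lemma LB_sym {D : nat} (A B : 'M[int]_D) : LB A B -> LB B A.
Proof. by case=> X [Y h]; exists Y, X; rewrite addrC. Qed.

Lemma RB_sym {D : nat} (A B : 'M[int]_D) : RB A B -> RB B A.
Proof. by case=> X [Y h]; exists Y, X; rewrite addrC. Qed.

Lemma LB_mul {D : nat} (A B C : 'M[int]_D) : LB A C -> LB B C -> A *m C = C *m A -> LB (A *m B) C.
Proof.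
case=> X [Y h1] [X' [Y' h2]] hc.
exists (X' *m X), (A *m Y' *m X + Y).
have -> : A *m B *m (X' *m X) + C *m (A *m Y' *m X + Y)
   = A *m (B *m X' + C *m Y') *m X + C *m Y.
  by rewrite !mulmxDr !mulmxDl !mulmxA hc addrA.
by rewrite h2 mulmx1.
Qed.

Lemma RB_mul {D : nat} (A B C : 'M[int]_D) : RB A C -> RB B C -> A *m B = B *m A ->
  C *m A = A *m C -> RB (A *m B) C.
Proof.
case=> X [Y h1] [X' [Y' h2]] hab hc.
exists (X *m X'), (X *m Y' *m A + Y).
have -> : X *m X' *m (A *m B) + (X *m Y' *m A + Y) *m C
   = X *m (X' *m B + Y' *m C) *m A + Y *m C.
  by rewrite hab !mulmxDl !mulmxDr !mulmxDl -!mulmxA hc addrA.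
by rewrite h2 mulmx1.
Qed.

Lemma int_unit (z w : int) : z * w = 1 -> z = 1 \/ z = -1.
Proof.
rewrite mulrC => /intUnitRing.unitzPl; rewrite qualifE => /orP [] /eqP ->; by [left|right].
Qed.

Lemma LB_lcop {D : nat} (A B : 'M[int]_D) : LB A B -> left_coprime A B.
Proof.
case=> X [Y h] G [_ [X1 eA]] [_ [X2 eB]]; rewrite eA eB in h.
have : \det G * \det (X1 *m X + X2 *m Y) = 1.
  by rewrite -det_mulmx mulmxDr !mulmxA h det1.
exact: int_unit.
Qed.

Lemma RB_rcop {D : nat} (A B : 'M[int]_D) : RB A B -> right_coprime A B.
Proof.
case=> X [Y h] G [_ [X1 eA]] [_ [X2 eB]]; rewrite eA eB in h.
have : \det G * \det (X *m X1 + Y *m X2) = 1.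
  by rewrite mulrC -det_mulmx mulmxDl -!mulmxA h det1.
exact: int_unit.
Qed.

Lemma lcop_LB {D : nat} (A B : 'M[int]_D) : nonsingular A -> left_coprime A B -> LB A B.
Proof.
move=> hA hcop.
have [Lm uL [R uR [d _ eM]]] := int_Smith_normal_form (row_mx A B).
set S := (\matrix_(i, j) _) in eM.
set G := Lm *m lsubmx S.
have hS : S = row_mx (lsubmx S) 0.
  rewrite -[S in LHS]hsubmxK; congr row_mx; apply/matrixP => i j.
  rewrite !mxE /=; case: eqP => [hij|]; last by rewrite mulr0n.
  by have := ltn_ord i; rewrite hij ltnNge leq_addr.
have eM2 : row_mx A B = G *m usubmx R.
  rewrite eM hS mul_mx_row mulmx0 -[R in LHS]vsubmxK mul_row_col mul0mx addr0.
  by rewrite /G.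
have eA : A = G *m lsubmx (usubmx R) by rewrite mulmx_lsub -eM2 row_mxKl.
have eB : B = G *m rsubmx (usubmx R) by rewrite mulmx_rsub -eM2 row_mxKr.
have hG : nonsingular G.
  move: hA; rewrite /nonsingular eA det_mulmx mulf_eq0 negb_or => /andP[] //.
have uG : G \in unitmx.
  rewrite unitmxE; case: (hcop G (conj hG (ex_intro _ _ eA)) (conj hG (ex_intro _ _ eB))) => ->.
    exact: unitr1.
  exact: unitrN1.
set W1 := lsubmx (invmx R).
have eG : row_mx A B *m W1 = G.
  rewrite /W1 mulmx_lsub eM -mulmxA mulmxV // mulmx1 hS mul_mx_row mulmx0.
  by rewrite row_mxKl.
exists (usubmx W1 *m invmx G), (dsubmx W1 *m invmx G).
rewrite !mulmxA -mulmxDl -mul_row_col vsubmxK eG mulmxV //.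
Qed.

Lemma rcop_RB {D : nat} (A B : 'M[int]_D) : nonsingular A -> right_coprime A B -> RB A B.
Proof.
move=> hA hcop.
have : LB A^T B^T.
  apply: lcop_LB; first by rewrite /nonsingular det_tr.
  move=> G [hG [X1 e1]] [_ [X2 e2]].
  have := hcop G^T.
  rewrite /unimodular det_tr; apply.
    split; first by rewrite /nonsingular det_tr.
    by exists X1^T; rewrite -trmx_mul -e1 trmxK.
  split; first by rewrite /nonsingular det_tr.
  by exists X2^T; rewrite -trmx_mul -e2 trmxK.
case=> X [Y h]; exists X^T, Y^T.
by apply: trmx_inj; rewrite raddfD /= !trmx_mul !trmxK h trmx1.
Qed.

Lemma key {D : nat} (A B P Q U V : 'M[int]_D) : \det A != 0 -> \det B != 0 ->
  A *m B = B *m A -> U *m A + V *m B = 1%:M -> A *m P = B *m Q ->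
  A *m P = A *m B *m (U *m Q + V *m P).
Proof.
move=> hA hB hAB hUV hPQ.
have inj : injective (map_mx (intr : int -> rat) : 'M[int]_D -> 'M[rat]_D).
  move=> M1 M2 e; apply/matrixP=> i j; apply: (@intr_inj rat).
  by have := congr1 (fun M : 'M[rat]_D => M i j) e; rewrite !mxE.
apply: inj; rewrite !map_mxM !map_mxD !map_mxM.
move: hAB hUV hPQ; move/(congr1 (map_mx (intr : int -> rat))).
rewrite !map_mxM => hAB; move/(congr1 (map_mx (intr : int -> rat))).
rewrite map_mxD !map_mxM map_mx1 => hUV; move/(congr1 (map_mx (intr : int -> rat))).
rewrite !map_mxM => hPQ.
have ua : (map_mx (intr : int -> rat) A) \in unitmx.
  by rewrite unitmxE unitfE det_map_mx intr_eq0.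
have ub : (map_mx (intr : int -> rat) B) \in unitmx.
  by rewrite unitmxE unitfE det_map_mx intr_eq0.
move: ua ub hAB hUV hPQ.
set a := map_mx _ A; set b := map_mx _ B; set u := map_mx _ U; set v := map_mx _ V.
set p := map_mx _ P; set q := map_mx _ Q => ua ub hAB hUV hPQ.
set z := invmx b *m p.
have bz : b *m z = p by rewrite /z mulKVmx.
have az : a *m z = q.
  by apply: (can_inj (mulKmx ub)); rewrite mulmxA -hAB -mulmxA bz.
clearbody z.
have -> : u *m q + v *m p = z.
  by rewrite -az -bz !mulmxA -mulmxDl hUV mul1mx.
by rewrite -mulmxA bz.
Qed.

Lemma key' {D : nat} (A B P Q X Y : 'M[int]_D) : \det A != 0 -> \det B != 0 ->
  A *m B = B *m A -> A *m X + B *m Y = 1%:M -> P *m A = Q *m B ->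
  P *m A = (Q *m X + P *m Y) *m (A *m B).
Proof.
move=> hA hB hAB hXY hPQ.
have h1 : A^T *m B^T = B^T *m A^T by rewrite -!trmx_mul hAB.
have h2 : X^T *m A^T + Y^T *m B^T = 1%:M.
  by apply: trmx_inj; rewrite raddfD /= !trmx_mul !trmxK hXY trmx1.
have h3 : A^T *m P^T = B^T *m Q^T by rewrite -!trmx_mul hPQ.
have dA : \det A^T != 0 by rewrite det_tr.
have dB : \det B^T != 0 by rewrite det_tr.
have e := @key D A^T B^T P^T Q^T X^T Y^T dA dB h1 h2 h3.
apply: trmx_inj; rewrite trmx_mul e [RHS]trmx_mul (trmx_mul A B) -h1; congr (_ *m _).
by rewrite raddfD /= !trmx_mul.

Qed.

Section Fam.
Context (D L : nat) (N : 'I_L -> 'M[int]_D)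
  (hns : forall i, nonsingular (N i))
  (hcomm : forall i j, i != j -> mx_commute (N i) (N j))
  (hcop : forall i j, i != j -> mx_coprime (N i) (N j)).

Let P (s : seq 'I_L) := foldr (fun i M => N i *m M) 1%:M s.

Lemma comm_P M s : (forall x, x \in s -> M *m N x = N x *m M) -> M *m P s = P s *m M.
Proof.
elim: s => [|y s IH] h /=; first by rewrite mulmx1 mul1mx.
rewrite mulmxA h ?mem_head // -!mulmxA IH // => x hx; apply: h.
by rewrite in_cons hx orbT.
Qed.

Lemma P_rem x s : x \in s -> P s = N x *m P (rem x s).
Proof.
elim: s => [|y s IH] //=; rewrite in_cons; case: eqP => [-> _|/eqP hxy /= hx].
  by rewrite eqxx.
rewrite eq_sym (negbTE hxy) /= IH // !mulmxA; congr (_ *m _).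
by apply: hcomm; rewrite eq_sym.
Qed.

Lemma P_rem_r x s : uniq s -> x \in s -> P s = P (rem x s) *m N x.
Proof.
move=> us xs; rewrite (@P_rem x s xs) comm_P // => z; rewrite (mem_rem_uniq _ us) inE.
by case/andP=> hz _; apply: hcomm; rewrite eq_sym.
Qed.

Lemma det_P s : \det (P s) != 0.
Proof.
elim: s => [|y s IH] /=; first by rewrite det1 oner_neq0.
by rewrite det_mulmx mulf_neq0 //; apply: hns.
Qed.

Lemma LB_P_N s j : j \notin s -> LB (P s) (N j).
Proof.
elim: s => [|y s IH] /=.
  by move=> _; exists 1%:M, 0; rewrite mulmx1 mulmx0 addr0.
rewrite in_cons negb_or => /andP[hjy hjs]; apply: LB_mul; last 1 first.
- by apply: hcomm; rewrite eq_sym.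
- have hyj : y != j by rewrite eq_sym.
  by apply: lcop_LB; [apply: hns | exact: (proj1 (hcop y j hyj))].
- exact: IH.
Qed.

Lemma RB_P_N s j : uniq s -> j \notin s -> RB (P s) (N j).
Proof.
elim: s => [|y s IH] /=.
  by move=> _ _; exists 1%:M, 0; rewrite mul1mx mul0mx addr0.
case/andP=> ys us; rewrite in_cons negb_or => /andP[hjy hjs]; apply: RB_mul.
- have hyj : y != j by rewrite eq_sym.
  by apply: rcop_RB; [apply: hns | exact: (proj2 (hcop y j hyj))].
- exact: IH.
- apply: comm_P => x hx; apply: hcomm; apply/eqP => e; move: ys; rewrite e hx //.
- by apply: hcomm.
Qed.

Lemma LB_P_P s t : (forall x, x \in t -> x \notin s) -> LB (P s) (P t).
Proof.
elim: t => [|y t IH] /= h.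
  by exists 0, 1%:M; rewrite mulmx1 mulmx0 add0r.
apply: LB_sym; apply: LB_mul.
- apply: LB_sym; apply: LB_P_N; apply: h; exact: mem_head.
- apply: LB_sym; apply: IH => x hx; apply: h; by rewrite in_cons hx orbT.
- apply: comm_P => x hx; apply: hcomm; apply/eqP => e.
  by move: (h y (mem_head _ _)); rewrite e hx.
Qed.

Lemma RB_P_P s t : uniq s -> uniq t -> (forall x, x \in t -> x \notin s) -> RB (P s) (P t).
Proof.
move=> us; elim: t => [|y t IH] /= ut h.
  by exists 0, 1%:M; rewrite mul1mx mul0mx add0r.
case/andP: ut => yt ut.
apply: RB_sym; apply: RB_mul.
- apply: RB_sym; apply: RB_P_N => //; apply: h; exact: mem_head.
- apply: RB_sym; apply: IH => // x hx; apply: h; by rewrite in_cons hx orbT.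
- apply: comm_P => x hx; apply: hcomm; apply/eqP => e; move: yt; rewrite e hx //.
- symmetry; apply: comm_P => x hx; apply: hcomm; apply/eqP => e.
  by move: (h y (mem_head _ _)); rewrite e hx.
Qed.

Lemma lcrm_P s : uniq s -> forall C : 'M[int]_D, (forall i, i \in s -> exists Q : 'M[int]_D, C = N i *m Q) ->
  exists A : 'M[int]_D, C = P s *m A.
Proof.
elim: s => [|y s IH] /= us C h; first by exists C; rewrite mul1mx.
case/andP: us => ys us.
have [A' eA] : exists A', C = P s *m A'.
  by apply: IH => // i hi; apply: h; rewrite in_cons hi orbT.
have [Q eQ] := h y (mem_head _ _).
have hc : N y *m P s = P s *m N y.
  apply: comm_P => x hx; apply: hcomm; apply/eqP => e; move: ys; rewrite e hx //.
have [U [V hUV]] : RB (N y) (P s) by apply: RB_sym; exact: RB_P_N.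
have := @key D _ _ _ _ _ _ (hns y) (det_P s) hc hUV (etrans (esym eQ) eA).
by rewrite -eQ => ->; eexists.
Qed.

Lemma lclm_P s : uniq s -> forall C : 'M[int]_D, (forall i, i \in s -> exists Q : 'M[int]_D, C = Q *m N i) ->
  exists A : 'M[int]_D, C = A *m P s.
Proof.
elim: s => [|y s IH] /= us C h; first by exists C; rewrite mulmx1.
case/andP: us => ys us.
have [A' eA] : exists A', C = A' *m P s.
  by apply: IH => // i hi; apply: h; rewrite in_cons hi orbT.
have [Q eQ] := h y (mem_head _ _).
have hc : N y *m P s = P s *m N y.
  apply: comm_P => x hx; apply: hcomm; apply/eqP => e; move: ys; rewrite e hx //.
have [X [Y hXY]] : LB (N y) (P s) by apply: LB_sym; exact: LB_P_N.
have := @key' D _ _ _ _ _ _ (hns y) (det_P s) hc hXY (etrans (esym eQ) eA).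
by rewrite -eQ => ->; eexists.
Qed.

End Fam.

Theorem lemma2 (D L : nat) (N : 'I_L -> 'M[int]_D)
  (hns : forall i, nonsingular (N i))
  (hcomm : forall i j, i != j -> mx_commute (N i) (N j))
  (hcop : forall i j, i != j -> mx_coprime (N i) (N j)) :
  (forall I J : {set 'I_L}, [disjoint I & J] ->
     mx_commute (mxprod N I) (mxprod N J) /\ mx_coprime (mxprod N I) (mxprod N J))
  /\
  (forall I : {set 'I_L}, (2 <= #|I|)%N -> is_lcm N I (mxprod N I)).
Proof.
split.
  move=> I J dIJ.
  have hd : forall x, x \in enum J -> x \notin enum I.
    by move=> x; rewrite !mem_enum => hx; rewrite (disjointFl dIJ hx).
  split.
    rewrite /mx_commute /mxprod; apply: comm_P => x hx; symmetry.
    apply: comm_P => z hz; apply: hcomm; apply/eqP => e.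
    by move: (hd x hx); rewrite e hz.
  split; first by apply: LB_lcop; apply: LB_P_P.
  by apply: RB_rcop; apply: RB_P_P => //; apply: enum_uniq.
move=> I _; split; split.
- split; first exact: det_P.
  move=> i hi; exists (foldr (fun i : 'I_L => [eta mulmx (N i)]) 1%:M (rem i (enum I))).
  by rewrite /mxprod (@P_rem D L N hcomm i (enum I)) // mem_enum.
- move=> C [_ hC]; apply: lcrm_P => //; first exact: enum_uniq.
  by move=> i; rewrite mem_enum; apply: hC.
- split; first exact: det_P.
  move=> i hi; exists (foldr (fun i : 'I_L => [eta mulmx (N i)]) 1%:M (rem i (enum I))).
  by rewrite /mxprod (@P_rem_r D L N hcomm i (enum I)) ?enum_uniq // mem_enum.
- move=> C [_ hC]; apply: lclm_P => //; first exact: enum_uniq.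
  by move=> i; rewrite mem_enum; apply: hC.
Qed.
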